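(* Let $J'\subseteq J$ be nonempty, $t_o\in[0,T-\sum_{j\in J'}p_j]$, and let $\alpha$, $c_1<\dots<c_m$, $M$ and $B_\alpha$ be as in the context. Let $1\le q<m$ and let $t_\alpha\in[c_q,c_{q+1})$ with $t_\alpha\in[t_o,t_e-p_\alpha]$ and $t_\alpha\notin B_\alpha$. Let $j,k\in J'\setminus\{\alpha\}$ with $M(j)\le q<M(k)$. Then for every partial schedule of $J'$ starting at $t_o$ in which $\alpha$ starts at time $t_\alpha$, job $j$ is processed before $\alpha$ and job $k$ is processed after $\alpha$, no relation of the dominance rule between $\alpha$ and $j$, between $\alpha$ and $k$, or between $j$ and $k$ is violated (regardless of the start times of $j$ and $k$).
   Context: $J$ is a finite set of jobs; job $j$ has processing time $p_j>0$ and weight $w_j>0$; $T=\sum_{j\in J}p_j$. For $J'\subseteq J$ and $t_o\ge0$, a partial schedule of $J'$ starting at $t_o$ is an ordering of $J'$ processed consecutively without idle time from time $t_o$; job $j$ has (absolute) start time $t_j$. For $t\ge 0$, $\varphi_j(t)=\frac{w_j}{p_j(p_j+t)}$. For jobs $i,j$ with $w_ip_j\neq w_jp_i$, $t^*_{ij}=\frac{w_jp_i^2-w_ip_j^2}{w_ip_j-w_jp_i}$ (the unique real $t$ with $\varphi_i(t)=\varphi_j(t)$). Dominance rule: for an interval $I\subseteq[0,\infty)$, the relation ''$i$ dominates $j$ on $I$'' is violated by a (partial) schedule if $j$ is processed before $i$ and both $t_j\in I$ and $t_i-p_j\in I$. The rule contains, for each pair of distinct jobs $i,j$ with $(p_i,w_i)\ne(p_j,w_j)$: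 (1) if $\varphi_i(t)\ge\varphi_j(t)$ for all $t\ge 0$, ''$i$ dominates $j$ on $[0,\infty)$''; (2) otherwise, if $\varphi_j(t)\ge\varphi_i(t)$ for all $t\ge0$, ''$j$ dominates $i$ on $[0,\infty)$''; (3) otherwise, labelling the pair so that $\varphi_i(0)>\varphi_j(0)$, $t^*_{ij}>0$ is defined and the rule contains ''$i$ dominates $j$ on $[0,t^*_{ij})$'' and ''$j$ dominates $i$ on $[t^*_{ij},\infty)$''. Banned set: for $i\in J$, $B_i$ is the union over all $j\in J\setminus\{i\}$ with $\varphi_i(0)>\varphi_j(0)$, $w_ip_j\ne w_jp_i$ and $t^*_{ij}\in(0,T)$ of the intervals $[t^*_{ij},t^*_{ij}+p_j)$. Subproblem data: $t_e=t_o+\sum_{j\in J'}p_j$; $\alpha\in J'$ maximizes $\varphi_i(t_o)$ over $i\in J'$, ties broken in favour of maximum $\varphi_i(t_e)$; for $j\in J'\setminus\{\alpha\}$ with $t^*_{\alpha j}$ defined, $c_{\alpha j}=t^*_{\alpha j}+p_j$; $C=\{c_{\alpha j}: j\in J'\setminus\{\alpha\},\ t^*_{\alpha j}\text{ defined},\ c_{\alpha j}\in(t_o,t_e)\}\cup\{t_o,t_e\}$ with distinct elements $t_o=c_1<\dots<c_m=t_e$; $M(\alpha)=1$, and for $j\neq\alpha$, $M(j)=r$ if $t^*_{\alpha j}$ is defined, $t^*_{\alpha j}\in(t_o,t_e)$ and $c_{\alpha j}=c_r$ for some $r\le m$, and $M(j)=|J'|+1$ otherwise. *)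

(* Defs.v *)
From HB Require Import structures.
From mathcomp Require Import all_boot all_order all_algebra.
Set Implicit Arguments. Unset Strict Implicit. Unset Printing Implicit Defensive.
Import Order.TTheory GRing.Theory Num.Theory.
Local Open Scope ring_scope.

Section Sched.
Variables (R : realFieldType) (J : finType) (p w : J -> R).

Definition Ttot : R := \sum_(j : J) p j.

Definition phi (j : J) (t : R) : R := w j / (p j * (p j + t)).

(* t*_{ij} is "defined" iff w_i p_j <> w_j p_i *)
Definition tdef (i j : J) : bool := w i * p j != w j * p i.
Definition tstar (i j : J) : R :=
  (w j * (p i) ^+ 2 - w i * (p j) ^+ 2) / (w i * p j - w j * p i).

(* "a dominates b on I" belongs to the dominance rule *)
Definition rule_rel (a b : J) (I : R -> Prop) : Prop :=
  a <> b /\ (p a, w a) <> (p b, w b) /\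
  [\/ (* case (1)/(2): a dominates b everywhere on [0,oo) *)
      (forall t, 0 <= t -> phi b t <= phi a t) /\ I = (fun t => 0 <= t),
      (* case (3), a is the job with larger phi at 0 *)
      [/\ ~ (forall t, 0 <= t -> phi b t <= phi a t),
          ~ (forall t, 0 <= t -> phi a t <= phi b t),
          phi b 0 < phi a 0 &
          I = (fun t => 0 <= t < tstar a b)]
    | (* case (3), a is the job with smaller phi at 0 *)
      [/\ ~ (forall t, 0 <= t -> phi b t <= phi a t),
          ~ (forall t, 0 <= t -> phi a t <= phi b t),
          phi a 0 < phi b 0 &
          I = (fun t => tstar b a <= t)]].

(* a partial schedule of J' starting at t_o is a sequence s with
   perm_eq s (enum J'); the absolute start time of job j in s: *)
Definition start (s : seq J) (t_o : R) (j : J) : R :=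
  t_o + \sum_(i <- take (index j s) s) p i.

Definition violated (s : seq J) (t_o : R) (a b : J) (I : R -> Prop) : Prop :=
  (index b s < index a s)%N /\ I (start s t_o b) /\ I (start s t_o a - p b).

Definition no_violation (s : seq J) (t_o : R) (a b : J) : Prop :=
  forall I : R -> Prop,
    (rule_rel a b I -> ~ violated s t_o a b I) /\
    (rule_rel b a I -> ~ violated s t_o b a I).

Definition inB (i : J) (t : R) : Prop :=
  exists j : J, [/\ j != i, phi j 0 < phi i 0, tdef i j,
     0 < tstar i j < Ttot & tstar i j <= t < tstar i j + p j].

Definition t_end (J' : {set J}) (t_o : R) : R := t_o + \sum_(j in J') p j.

Definition is_alpha (J' : {set J}) (t_o : R) (a : J) : Prop :=
  [/\ a \in J',
      forall i, i \in J' -> phi i t_o <= phi a t_o &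
      forall i, i \in J' -> phi i t_o = phi a t_o ->
         phi i (t_end J' t_o) <= phi a (t_end J' t_o)].

Definition cA (a j : J) : R := tstar a j + p j.

Definition Cseq (J' : {set J}) (t_o : R) (a : J) : seq R :=
  sort <=%R (undup ([:: t_o; t_end J' t_o] ++
    [seq cA a j | j <- enum J' &
       [&& j != a, tdef a j & t_o < cA a j < t_end J' t_o]])).

(* c_r for 1 <= r <= m *)
Definition cc (J' : {set J}) (t_o : R) (a : J) (r : nat) : R :=
  nth 0 (Cseq J' t_o a) r.-1.

Definition mm (J' : {set J}) (t_o : R) (a : J) : nat := size (Cseq J' t_o a).

(* M(j); "c_{aj} = c_r for some r <= m" iff c_{aj} \in Cseq, with r the
   (1-based) position, unique since the c_r are distinct *)
Definition MM (J' : {set J}) (t_o : R) (a j : J) : nat :=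
  if j == a then 1%N
  else if [&& tdef a j, t_o < tstar a j < t_end J' t_o &
              cA a j \in Cseq J' t_o a]
       then (index (cA a j) (Cseq J' t_o a)).+1
       else #|J'|.+1.

End Sched.

(* Main.v *)
Require Import Defs.
From HB Require Import structures.
From mathcomp Require Import all_boot all_order all_algebra.
From mathcomp Require Import ring lra zify.
Import Order.TTheory GRing.Theory Num.Theory.
Set Implicit Arguments. Unset Strict Implicit.
Local Open Scope ring_scope.

Definition Lf (R : realFieldType) (J : finType) (p w : J -> R) (a b : J) (t : R) : R :=
  w a * p b * (p b + t) - w b * p a * (p a + t).
Definition Bc (R : realFieldType) (J : finType) (p w : J -> R) (a b : J) : R :=
  w a * p b - w b * p a.
Definition Ac (R : realFieldType) (J : finType) (p w : J -> R) (a b : J) : R :=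
  w a * p b ^+ 2 - w b * p a ^+ 2.

Lemma LfE (R : realFieldType) (J : finType) (p w : J -> R) a b t :
  Lf p w a b t = Ac p w a b + Bc p w a b * t.
Proof. rewrite /Lf /Ac /Bc; ring. Qed.

Lemma Lf_tstar (R : realFieldType) (J : finType) (p w : J -> R) a b t :
  tdef p w a b -> Lf p w a b t = Bc p w a b * (t - tstar p w a b).
Proof.
rewrite /tdef /tstar LfE /Ac /Bc => h.
rewrite -subr_eq0 in h. field. exact: h.
Qed.

Lemma tstarC (R : realFieldType) (J : finType) (p w : J -> R) a b :
  tstar p w a b = tstar p w b a.
Proof.
rewrite /tstar -[X in _ = X / _]opprB -[X in _ = _ / X]opprB.
by rewrite invrN mulrNN.
Qed.

Lemma divle (R : realFieldType) (x y d1 d2 : R) : 0 < d1 -> 0 < d2 ->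
  (x / d1 <= y / d2) = (x * d2 <= y * d1).
Proof.
move=> h1 h2. rewrite ler_pdivrMr // mulrAC ler_pdivlMr //.
Qed.

Lemma divlt (R : realFieldType) (x y d1 d2 : R) : 0 < d1 -> 0 < d2 ->
  (x / d1 < y / d2) = (x * d2 < y * d1).
Proof.
move=> h1 h2. rewrite ltr_pdivrMr // mulrAC ltr_pdivlMr //.
Qed.

Lemma phiLe (R : realFieldType) (J : finType) (p w : J -> R)
  (hp : forall j, 0 < p j) a b t : 0 <= t ->
  (phi p w b t <= phi p w a t) = (0 <= Lf p w a b t).
Proof.
move=> ht; have ha := hp a; have hb := hp b.
rewrite /phi divle; try by apply: mulr_gt0 => //; lra.
by rewrite /Lf subr_ge0 !mulrA.
Qed.

Lemma phiLt (R : realFieldType) (J : finType) (p w : J -> R)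
  (hp : forall j, 0 < p j) a b t : 0 <= t ->
  (phi p w b t < phi p w a t) = (0 < Lf p w a b t).
Proof.
move=> ht; have ha := hp a; have hb := hp b.
rewrite /phi divlt; try by apply: mulr_gt0 => //; lra.
by rewrite /Lf subr_gt0 !mulrA.
Qed.

Lemma cross (R : realFieldType) (J : finType) (p w : J -> R)
  (hp : forall j, 0 < p j) a b t :
  phi p w b 0 < phi p w a 0 -> ~ (forall t, 0 <= t -> phi p w b t <= phi p w a t) ->
  0 <= t -> (t < tstar p w a b) = (phi p w b t < phi p w a t).
Proof.
move=> h0 hn ht.
rewrite phiLt // in h0; rewrite LfE mulr0 addr0 in h0.
have hB : Bc p w a b < 0.
  rewrite ltNge; apply/negP => hB; apply: hn => u hu.
  rewrite phiLe // LfE. have := mulr_ge0 hB hu. lra.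
have hd : tdef p w a b by rewrite /tdef -subr_eq0; apply: ltr0_neq0.
rewrite phiLt // Lf_tstar // nmulr_rgt0 // subr_lt0 //.
Qed.

Lemma start_ge (R : realFieldType) (J : finType) (p : J -> R)
  (hp : forall j, 0 < p j) s t_o x : t_o <= start p s t_o x.
Proof.
rewrite /start lerDl; apply: sumr_ge0 => i _; exact: ltW.
Qed.

Lemma start_lt (R : realFieldType) (J : finType) (p : J -> R)
  (hp : forall j, 0 < p j) s t_o a b : a \in s -> (index a s < index b s)%N ->
  start p s t_o a + p a <= start p s t_o b.
Proof.
move=> ha hab; rewrite /start -addrA lerD2l.
have -> : index b s = (index a s + (index b s - index a s))%N by lia.
rewrite takeD big_cat /= lerD2l.
have hlt : (index a s < size s)%N by rewrite index_mem.
rewrite (drop_nth a hlt) nth_index //.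
have -> : (index b s - index a s = (index b s - index a s).-1.+1)%N by lia.
rewrite /= big_cons lerDl; apply: sumr_ge0 => i _; exact: ltW.
Qed.

Lemma Cseq_size (R : realFieldType) (J : finType) (p w : J -> R) (J' : {set J}) (t_o : R) a :
  a \in J' -> (mm p w J' t_o a <= #|J'|.+1)%N.
Proof.
move=> ha; rewrite /mm /Cseq size_sort.
apply: leq_trans (size_undup _) _.
rewrite /= size_map size_filter.
set P := (fun j => _).
have := count_predC P (enum J').
have : has (predC P) (enum J').
  apply/hasP; exists a; first by rewrite mem_enum.
  by rewrite /= /P eqxx.
rewrite has_count -cardE. lia.
Qed.

Lemma Cseq_mono (R : realFieldType) (J : finType) (p w : J -> R) (J' : {set J}) (t_o : R) a i k :
  (i <= k)%N -> (k < mm p w J' t_o a)%N ->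
  nth 0 (Cseq p w J' t_o a) i <= nth 0 (Cseq p w J' t_o a) k.
Proof.
move=> hik hk.
apply: (sorted_leq_nth le_trans lexx) => //.
- rewrite /Cseq; apply: sort_sorted => x y; exact: le_total.
- rewrite inE; exact: leq_ltn_trans hik hk.
Qed.

Lemma in_Cseq (R : realFieldType) (J : finType) (p w : J -> R) (J' : {set J}) (t_o : R) a k :
  k \in J' -> k != a -> tdef p w a k -> t_o < cA p w a k < t_end p J' t_o ->
  cA p w a k \in Cseq p w J' t_o a.
Proof.
move=> hk hka hd hc.
rewrite /Cseq mem_sort mem_undup mem_cat; apply/orP; right.
apply/mapP; exists k => //.
by rewrite mem_filter hka hd hc mem_enum hk.
Qed.

Lemma LfN (R : realFieldType) (J : finType) (p w : J -> R) a b t :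
  Lf p w b a t = - Lf p w a b t.
Proof. rewrite /Lf; ring. Qed.

Lemma cross_B (R : realFieldType) (J : finType) (p w : J -> R)
  (hp : forall j, 0 < p j) a b :
  phi p w b 0 < phi p w a 0 -> ~ (forall t, 0 <= t -> phi p w b t <= phi p w a t) ->
  Bc p w a b < 0.
Proof.
move=> h0 hn.
rewrite phiLt // in h0; rewrite LfE mulr0 addr0 in h0.
rewrite ltNge; apply/negP => hB; apply: hn => u hu.
rewrite phiLe // LfE. have := mulr_ge0 hB hu. lra.
Qed.

Lemma Jfacts (R : realFieldType) (J : finType) (p w : J -> R)
  (J' : {set J}) (t_o : R) (alpha j : J) (q : nat) (ta : R)
  (hja : j != alpha) (haJ : alpha \in J')
  (hq : (1 <= q < mm p w J' t_o alpha)%N)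
  (hc1 : cc p w J' t_o alpha q <= ta)
  (hMj : (MM p w J' t_o alpha j <= q)%N) :
  [/\ tdef p w alpha j, t_o < tstar p w alpha j & tstar p w alpha j + p j <= ta].
Proof.
have hmm := Cseq_size p w t_o haJ.
move: hMj; rewrite /MM (negbTE hja).
case: ifP => [/and3P [hdj /andP [hsj1 hsj2] hinj] hMj | _ hMj]; last by exfalso; move: hMj hq hmm; clear; lia.
split => //.
set c := cA p w alpha j in hinj hMj.
have hi : (index c (Cseq p w J' t_o alpha) < mm p w J' t_o alpha)%N
  by rewrite /mm index_mem.
have := @Cseq_mono R J p w J' t_o alpha (index c (Cseq p w J' t_o alpha)) q.-1.
rewrite nth_index // -/(cc p w J' t_o alpha q).
move=> h; have : c <= cc p w J' t_o alpha q.
  apply: h; [move: hMj; clear; lia | move: hq; clear; lia].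
rewrite /c /cA. lra.
Qed.

Lemma Bj_neg (R : realFieldType) (J : finType) (p w : J -> R)
  (hp : forall j, 0 < p j) (t_o : R) (alpha j : J) (hto0 : 0 <= t_o)
  (hdj : tdef p w alpha j) (hsj1 : t_o < tstar p w alpha j)
  (hmaxj : phi p w j t_o <= phi p w alpha t_o) : Bc p w alpha j < 0.
Proof.
rewrite phiLe // Lf_tstar // in hmaxj.
move: hdj; rewrite /tdef -subr_eq0 -/(Bc p w alpha j).
case: (ltgtP (Bc p w alpha j) 0) => // hb _.
move: hmaxj; rewrite pmulr_rge0 // subr_ge0; lra.
Qed.

Lemma Kneg (R : realFieldType) (J : finType) (p w : J -> R)
  (hp : forall j, 0 < p j)
  (J' : {set J}) (t_o : R) (alpha k : J) (q : nat) (ta : R)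
  (hk : k \in J') (hka : k != alpha) (hto0 : 0 <= t_o)
  (hte : t_o < t_end p J' t_o) (hteT : t_end p J' t_o <= Ttot p)
  (hint1 : t_o <= ta) (hint2 : ta <= t_end p J' t_o - p alpha)
  (hc2 : ta < cc p w J' t_o alpha q.+1)
  (hB : ~ inB p w alpha ta)
  (hmaxk : phi p w k t_o <= phi p w alpha t_o)
  (htiek : phi p w k t_o = phi p w alpha t_o ->
         phi p w k (t_end p J' t_o) <= phi p w alpha (t_end p J' t_o))
  (hMk : (q < MM p w J' t_o alpha k)%N) :
  Bc p w alpha k < 0 -> ta < tstar p w alpha k.
Proof.
move=> hBk.
have hpa := hp alpha; have hpk := hp k.
have hLk0 : 0 <= Lf p w alpha k t_o by rewrite -phiLe.
have hdk : tdef p w alpha k by rewrite /tdef -subr_eq0; apply: ltr0_neq0.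
have hLk : forall t, Lf p w alpha k t = Bc p w alpha k * (t - tstar p w alpha k)
  by move=> t; exact: Lf_tstar.
set sk := tstar p w alpha k in hLk *.
have hsk1 : t_o < sk.
  have h1 := hLk0; rewrite hLk nmulr_rge0 // subr_le0 in h1.
  rewrite lt_neqAle h1 andbT; apply/negP => /eqP heq.
  have h2 : phi p w k t_o = phi p w alpha t_o.
    apply/eqP; rewrite eq_le hmaxk /= phiLe // LfN hLk -heq subrr mulr0 oppr0 //.
  have := htiek h2; rewrite (@phiLe R J p w hp); last lra.
  rewrite hLk nmulr_rge0 // -heq. lra.
rewrite ltNge; apply/negP => hska; apply: hB.
have hskT : sk < Ttot p by lra.
have hskp : 0 < sk by lra.
case: (ltP ta (sk + p k)) => hta.
  exists k; split => //.
  - by rewrite phiLt // hLk nmulr_rgt0 // subr_lt0.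
  - by rewrite hskp hskT.
  - by rewrite hska hta.
exfalso.
have hcin : cA p w alpha k \in Cseq p w J' t_o alpha.
  apply: in_Cseq => //; rewrite /cA -/sk; apply/andP; split; lra.
move: hMk; rewrite /MM (negbTE hka) hdk hcin /= (_ : (t_o < sk < t_end p J' t_o) = true); last first.
  by apply/andP; split; lra.
set c := cA p w alpha k in hcin *.
rewrite /= => hMk.
have hi : (index c (Cseq p w J' t_o alpha) < mm p w J' t_o alpha)%N
  by rewrite /mm index_mem.
have := @Cseq_mono R J p w J' t_o alpha q (index c (Cseq p w J' t_o alpha)).
rewrite nth_index // -/(cc p w J' t_o alpha q.+1).
move=> h; have : cc p w J' t_o alpha q.+1 <= c.
  apply: h; [move: hMk; clear; lia | exact: hi].
rewrite /c /cA -/sk. lra.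
Qed.

Lemma Kfacts (R : realFieldType) (J : finType) (p w : J -> R)
  (hp : forall j, 0 < p j) (alpha k : J) (t_o ta : R)
  (hto0 : 0 <= t_o)
  (hmaxk : phi p w k t_o <= phi p w alpha t_o)
  (hKneg : Bc p w alpha k < 0 -> ta < tstar p w alpha k) :
  (forall t, t_o <= t -> t <= ta -> 0 <= Lf p w alpha k t) /\
  (Bc p w alpha k < 0 -> forall t, t <= ta -> 0 < Lf p w alpha k t).
Proof.
have hLk0 : 0 <= Lf p w alpha k t_o by rewrite -phiLe.
have hKpos : Bc p w alpha k < 0 -> forall t, t <= ta -> 0 < Lf p w alpha k t.
  move=> hBk t ht.
  have hdk : tdef p w alpha k by rewrite /tdef -subr_eq0; apply: ltr0_neq0.
  rewrite Lf_tstar // nmulr_rgt0 // subr_lt0.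
  have := hKneg hBk; lra.
split => // t h1 h2.
case: (ltP (Bc p w alpha k) 0) => hBk; first by apply: ltW; exact: hKpos.
move: hLk0; rewrite !LfE.
have : 0 <= Bc p w alpha k * (t - t_o) by apply: mulr_ge0; lra.
have : Bc p w alpha k * (t - t_o) = Bc p w alpha k * t - Bc p w alpha k * t_o by ring.
lra.
Qed.

Lemma core_aj (R : realFieldType) (J : finType) (p w : J -> R)
  (hp : forall j, 0 < p j) (alpha j : J) (t_o ta tj : R)
  (hto0 : 0 <= t_o) (hint1 : t_o <= ta)
  (hdj : tdef p w alpha j) (hsj1 : t_o < tstar p w alpha j)
  (hcj : tstar p w alpha j + p j <= ta)
  (hmaxj : phi p w j t_o <= phi p w alpha t_o) :
  forall I, rule_rel p w alpha j I -> ~ (I tj /\ I (ta - p j)).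
Proof.
have hBj := Bj_neg hp hto0 hdj hsj1 hmaxj.
have hpj := hp j.
set sj := tstar p w alpha j in hsj1 hcj *.
have hLj : forall t, Lf p w alpha j t = Bc p w alpha j * (t - sj) by move=> t; exact: Lf_tstar.
have hta0 : 0 <= ta by lra.
have hsj0 : 0 < sj by lra.
have hLj0 : 0 < Lf p w alpha j 0 by rewrite hLj nmulr_rgt0 // subr_lt0.
have hLjta : Lf p w alpha j ta < 0 by rewrite hLj nmulr_rlt0 // subr_gt0; lra.
move=> I; case=> _ [_ [[hall ->]|[hn1 hn2 h0 ->]|[hn1 hn2 h0 ->]]] [h1 h2].
- have := hall ta hta0; rewrite phiLe //; lra.
- move: h2; rewrite -/sj => /andP [_ h2]; lra.
- move: h0; rewrite phiLt // LfN; lra.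
Qed.

Lemma core_ka (R : realFieldType) (J : finType) (p w : J -> R)
  (hp : forall j, 0 < p j) (hw : forall j, 0 < w j) (alpha k : J) (t_o te ta tk : R)
  (hto0 : 0 <= t_o) (hte : t_o < te) (hint1 : t_o <= ta) (htk : ta <= tk)
  (hmaxk : phi p w k t_o <= phi p w alpha t_o)
  (htiek : phi p w k t_o = phi p w alpha t_o -> phi p w k te <= phi p w alpha te)
  (hKneg : Bc p w alpha k < 0 -> ta < tstar p w alpha k) :
  forall I, rule_rel p w k alpha I -> ~ (I ta /\ I tk).
Proof.
have [hKge hKpos] := Kfacts hp hto0 hmaxk hKneg.
have hta0 : 0 <= ta by lra.
move=> I; case=> _ [hpw [[hall ->]|[hn1 hn2 h0 ->]|[hn1 hn2 h0 ->]]] [h1 h2].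
- apply: hpw.
  have e1 : Lf p w alpha k t_o = 0.
    have := hall t_o hto0; rewrite phiLe // LfN.
    have := hKge t_o (lexx _) hint1. lra.
  have e0 : phi p w k t_o = phi p w alpha t_o.
    apply/eqP; rewrite eq_le hmaxk /= phiLe // LfN e1 oppr0 //.
  have e2 : Lf p w alpha k te = 0.
    have hte0 : 0 <= te by lra.
    have h3 := htiek e0; have h4 := hall _ hte0.
    rewrite phiLe // in h3; rewrite phiLe // LfN in h4; lra.
  move: e1 e2; rewrite !LfE => e1 e2.
  have eB : Bc p w alpha k = 0.
    have : Bc p w alpha k * (te - t_o) = 0.
      have : Bc p w alpha k * (te - t_o) =
        (Ac p w alpha k + Bc p w alpha k * te) -
        (Ac p w alpha k + Bc p w alpha k * t_o) by ring.
      lra.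
    move/eqP; rewrite mulf_eq0 => /orP [/eqP //|/eqP h]; lra.
  have eA : Ac p w alpha k = 0 by move: e1; rewrite eB mul0r addr0.
  have hwk := hw k; have hwa := hw alpha; have hpa := hp alpha; have hpk := hp k.
  have ep : p k = p alpha.
    have : w k * p alpha * (p k - p alpha) = 0.
      have : w k * p alpha * (p k - p alpha) = Ac p w alpha k - p k * Bc p w alpha k
        by rewrite /Ac /Bc; ring.
      by rewrite eA eB mulr0 subr0.
    move/eqP; rewrite !mulf_eq0 => /orP [/orP [/eqP h|/eqP h]|/eqP h]; lra.
  have ew : w k = w alpha.
    have : (w alpha - w k) * p alpha = 0.
      have : (w alpha - w k) * p alpha = Bc p w alpha k by rewrite /Bc ep; ring.
      by rewrite eB.
    move/eqP; rewrite mulf_eq0 => /orP [/eqP h|/eqP h]; lra.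
  by rewrite ep ew.
- move: h1 => /andP [_ h1].
  move: h1; rewrite (cross hp) //.
  rewrite phiLt // LfN. have := hKge ta hint1 (lexx _). lra.
- have hBk := cross_B hp h0 hn2.
  have := hKneg hBk. lra.
Qed.

Lemma core_kj (R : realFieldType) (J : finType) (p w : J -> R)
  (hp : forall j, 0 < p j) (alpha j k : J) (t_o ta tj tk : R)
  (hto0 : 0 <= t_o) (htj : t_o <= tj) (hjta : tj + p j <= ta) (htk : ta <= tk)
  (hdj : tdef p w alpha j) (hsj1 : t_o < tstar p w alpha j)
  (hcj : tstar p w alpha j + p j <= ta)
  (hmaxj : phi p w j t_o <= phi p w alpha t_o)
  (hmaxk : phi p w k t_o <= phi p w alpha t_o)
  (hKneg : Bc p w alpha k < 0 -> ta < tstar p w alpha k) :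
  forall I, rule_rel p w k j I -> ~ (I tj /\ I (tk - p j)).
Proof.
have hBj := Bj_neg hp hto0 hdj hsj1 hmaxj.
have [hKge hKpos] := Kfacts hp hto0 hmaxk hKneg.
have hpj := hp j.
set sj := tstar p w alpha j in hsj1 hcj *.
have hLj : forall t, Lf p w alpha j t = Bc p w alpha j * (t - sj) by move=> t; exact: Lf_tstar.
have hta0 : 0 <= ta by lra.
have hsj0 : 0 < sj by lra.
have hLj0 : 0 < Lf p w alpha j 0 by rewrite hLj nmulr_rgt0 // subr_lt0.
have hLjta : Lf p w alpha j ta < 0 by rewrite hLj nmulr_rlt0 // subr_gt0; lra.
set x := ta - p j.
have hx0 : 0 <= x by rewrite /x; lra.
have hLjx : Lf p w alpha j x <= 0 by rewrite hLj nmulr_rle0 // subr_ge0 /x; lra.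
have hLkx : 0 <= Lf p w alpha k x by apply: hKge; rewrite /x; lra.
have hLkta : 0 <= Lf p w alpha k ta by apply: hKge; lra.
have hjx : phi p w k x <= phi p w j x.
  apply: (@le_trans _ _ (phi p w alpha x)); first by rewrite phiLe.
  by rewrite phiLe // LfN; lra.
move=> I; case=> _ [_ [[hall ->]|[hn1 hn2 h0 ->]|[hn1 hn2 h0 ->]]] [h1 h2].
- have hC := hall ta hta0.
  have hA : phi p w alpha ta < phi p w j ta by rewrite phiLt // LfN; lra.
  have hB : phi p w k ta <= phi p w alpha ta by rewrite phiLe.
  by have := le_lt_trans (le_trans hC hB) hA; rewrite ltxx.
- move: h2 => /andP [_ h2].
  have : ~~ (x < tstar p w k j) by rewrite (cross hp) // -leNgt.
  rewrite -leNgt /x; lra.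
- have hLk0 : 0 < Lf p w alpha k 0.
    rewrite -phiLt //; apply: lt_trans h0 _; by rewrite phiLt // LfN; lra.
  have hkx : 0 < Lf p w alpha k x.
    case: (ltP (Bc p w alpha k) 0) => hBk; first by apply: hKpos => //; rewrite /x; lra.
    rewrite LfE; move: hLk0; rewrite LfE mulr0 addr0.
    have := mulr_ge0 hBk hx0; lra.
  have : x < tstar p w j k.
    rewrite (cross hp) //; apply: lt_le_trans (_ : phi p w alpha x <= _).
      by rewrite phiLt.
    by rewrite phiLe // LfN; lra.
  rewrite /x; lra.
Qed.

Unset Implicit Arguments.

Theorem lemma7 (R : realFieldType) (J : finType) (p w : J -> R)
  (hp : forall j, 0 < p j) (hw : forall j, 0 < w j)
  (J' : {set J}) (hJ' : J' != set0)
  (t_o : R) (hto : 0 <= t_o <= Ttot p - \sum_(j in J') p j)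
  (alpha : J) (halpha : is_alpha p w J' t_o alpha)
  (q : nat) (hq : (1 <= q < mm p w J' t_o alpha)%N)
  (talpha : R)
  (hc : cc p w J' t_o alpha q <= talpha < cc p w J' t_o alpha q.+1)
  (hint : t_o <= talpha <= t_end p J' t_o - p alpha)
  (hB : ~ inB p w alpha talpha)
  (j k : J) (hj : j \in J') (hk : k \in J')
  (hja : j != alpha) (hka : k != alpha)
  (hM : (MM p w J' t_o alpha j <= q < MM p w J' t_o alpha k)%N)
  (s : seq J) (hs : perm_eq s (enum J'))
  (hsa : start p s t_o alpha = talpha)
  (hjbefore : (index j s < index alpha s)%N)
  (hkafter : (index alpha s < index k s)%N) :
  no_violation p w s t_o alpha j /\ no_violation p w s t_o alpha k /\
  no_violation p w s t_o j k.
Proof.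
case: halpha => haJ hmax htie.
have hsum : 0 < \sum_(i in J') p i.
  rewrite (bigD1 j hj) /=; have := hp j.
  have : 0 <= \sum_(i in J' | i != j) p i by apply: sumr_ge0 => i _; exact: ltW.
  lra.
have hte : t_o < t_end p J' t_o by rewrite /t_end; lra.
have hteT : t_end p J' t_o <= Ttot p by rewrite /t_end; lra.
have hto0 : 0 <= t_o by case/andP: hto.
have haS : alpha \in s.
  by rewrite -index_mem; apply: leq_trans hkafter (index_size _ _).
have hjS : j \in s.
  by rewrite -index_mem; apply: leq_trans hjbefore (index_size _ _).
have htj : t_o <= start p s t_o j := start_ge hp s t_o j.
have hjta : start p s t_o j + p j <= talpha by rewrite -hsa; exact: start_lt.
have hatk : talpha + p alpha <= start p s t_o k by rewrite -hsa; exact: start_lt.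
have hpa := hp alpha; have hpj := hp j.
case/andP: hint => hint1 hint2.
case/andP: hc => hc1 hc2.
case/andP: hM => hMj hMk.
have [hdj hsj1 hcj] := Jfacts hja haJ hq hc1 hMj.
have hmaxj := hmax j hj; have hmaxk := hmax k hk.
have hKneg := Kneg hp hk hka hto0 hte hteT hint1 hint2 hc2 hB hmaxk (htie k hk) hMk.
have htk1 : talpha <= start p s t_o k - p alpha by lra.
have htk2 : talpha <= start p s t_o k by lra.
split; [|split].
- move=> I; split.
  + move=> hr [_ hv]; rewrite hsa in hv.
    exact: (core_aj hp hto0 hint1 hdj hsj1 hcj hmaxj hr hv).
  + by case=> _ _ [hlt _]; move: hlt hjbefore; clear; lia.
- move=> I; split.
  + by case=> _ _ [hlt _]; move: hlt hkafter; clear; lia.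
  + move=> hr [_ hv]; rewrite hsa in hv.
    exact: (core_ka hp hw hto0 hte hint1 htk1 hmaxk (htie k hk) hKneg hr hv).
- move=> I; split.
  + by case=> _ _ [hlt _]; move: hlt hjbefore hkafter; clear; lia.
  + move=> hr [_ hv].
    exact: (core_kj hp hto0 htj hjta htk2 hdj hsj1 hcj hmaxj hmaxk hKneg hr hv).
Qed.
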